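(* Consider a fixed-size experiment measuring a binary observable $P$ (single-shot outcomes in $\{-1,+1\}$) with ideal expectation $\langle P\rangle_0=1$. Fix a Richardson rule of order $k\ge1$ with scale factors $1=\lambda_0<\cdots<\lambda_k$, coefficients $c_j$ with $\sum_jc_j=1$, $\sum_jc_j\lambda_j^m=0$ ($m=1,\ldots,k$), allocation fractions $\pi_j>0$, $\sum_j\pi_j=1$, independent samples across scales. Suppose that for each $j$ \[ \mu(\lambda_j\epsilon)=\langle P\rangle_{\lambda_j\epsilon}=(1-\gamma\lambda_j\epsilon)^{\ell_n}+O_n(\epsilon^2),\qquad\gamma>0, \] where $\ell_n$ is a fixed positive integer. Let $\kappa_n=\gamma\ell_n$. Then, with $D(\epsilon)=\mathrm{Bias}_{\mathrm{noisy}}(\epsilon)^2-\mathrm{Bias}_{\mathrm{ZNE}}(\epsilon)^2$ and $A_k(\epsilon)=\sum_jc_j^2v(\lambda_j\epsilon)/\pi_j-v(\epsilon)$, \[ D(\epsilon)=\kappa_n^2\epsilon^2+O_n(\epsilon^3),\qquad v_n(\epsilon)=2\kappa_n\epsilon+O_n(\epsilon^2),\qquad A_k(\epsilon)=K_{1,k,n}\epsilon+O_n(\epsilon^2), \] with \[ K_{1,k,n}=2\kappa_n\left[\sum_j\frac{c_j^2\lambda_j}{\pi_j}-1\right]; \] that is, the leading MSE balance $\Delta_{\mathrm{MSE}}(\epsilon,B)=D(\epsilon)-A_k(\epsilon)/B$ holds with $p=1$, $q=1$, $D_{1,n}=\kappa_n^2$, $\nu_n=2\kappa_n$. The lower local help-harm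 boundary satisfies \[ \epsilon^*_n(B)\sim\frac{2}{\kappa_n}\left[\sum_j\frac{c_j^2\lambda_j}{\pi_j}-1\right]B^{-1}\qquad(B\to\infty). \]
   Context: $\mu(\epsilon)$ is the noisy expectation of $P$, $v_n(\epsilon)=1-\mu(\epsilon)^2$ its single-shot variance. With total shot budget $B$, the unmitigated estimator is the mean of $B$ shots at noise $\epsilon$ and $\widehat\mu_{\mathrm{ZNE}}=\sum_jc_j\widehat\mu(\lambda_j\epsilon)$ with $\widehat\mu(\lambda_j\epsilon)$ the mean of $\pi_jB$ shots at noise $\lambda_j\epsilon$. $\mathrm{Bias}_{\mathrm{noisy}}=\mu(\epsilon)-\langle P\rangle_0$, $\mathrm{Bias}_{\mathrm{ZNE}}=\mathbb E[\widehat\mu_{\mathrm{ZNE}}]-\langle P\rangle_0$, and $\Delta_{\mathrm{MSE}}=\mathrm{MSE}_{\mathrm{noisy}}-\mathrm{MSE}_{\mathrm{ZNE}}$ with $\mathrm{MSE}=\mathbb E[(\widehat\mu-\langle P\rangle_0)^2]$. The lower local help-harm boundary $\epsilon^*_n(B)$ is the first positive small-noise zero of $\Delta_{\mathrm{MSE}}(\cdot,B)$ where it changes from negative to positive; $\sim$ means ratio tends to $1$. *)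

(* Defs.v *)
From HB Require Import structures.
From mathcomp Require Import all_boot all_order all_algebra.
From mathcomp Require Import reals.
Set Implicit Arguments. Unset Strict Implicit. Unset Printing Implicit Defensive.
Import Order.TTheory GRing.Theory Num.Theory.
Local Open Scope ring_scope.

Section ZNE.
Variable R : realType.

Definition bigO_at0 (f : R -> R) (n : nat) : Prop :=
  exists C : R, exists d : R, 0 < d /\
    forall e : R, 0 < e -> e < d -> `|f e| <= C * e ^+ n.

Definition richardson_rule (k : nat) (c lam : 'I_k.+1 -> R) : Prop :=
  [/\ lam ord0 = 1,
      (forall i j : 'I_k.+1, (i < j)%N -> lam i < lam j),
      \sum_(j < k.+1) c j = 1 &
      forall m : nat, (1 <= m <= k)%N -> \sum_(j < k.+1) c j * lam j ^+ m = 0].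

Definition allocation (k : nat) (pi : 'I_k.+1 -> R) : Prop :=
  (forall j, 0 < pi j) /\ \sum_(j < k.+1) pi j = 1.

(* ideal expectation <P>_0 = 1 *)
Definition bias_noisy (mu : R -> R) (e : R) : R := mu e - 1.
Definition bias_zne (k : nat) (c lam : 'I_k.+1 -> R) (mu : R -> R) (e : R) : R :=
  \sum_(j < k.+1) c j * mu (lam j * e) - 1.
(* single-shot variance *)
Definition vn (mu : R -> R) (e : R) : R := 1 - mu e ^+ 2.

(* MSE of the mean of B shots at noise e *)
Definition mse_noisy (mu : R -> R) (B e : R) : R :=
  bias_noisy mu e ^+ 2 + vn mu e / B.
(* MSE of sum_j c_j * (mean of pi_j B independent shots at noise lam_j e) *)
Definition mse_zne (k : nat) (c lam pi : 'I_k.+1 -> R) (mu : R -> R) (B e : R) : R :=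
  bias_zne c lam mu e ^+ 2 + \sum_(j < k.+1) c j ^+ 2 * vn mu (lam j * e) / (pi j * B).
Definition delta_mse k c lam pi mu B e : R :=
  mse_noisy mu B e - @mse_zne k c lam pi mu B e.

Definition Dbias k c lam mu e : R := bias_noisy mu e ^+ 2 - @bias_zne k c lam mu e ^+ 2.
Definition Ak (k : nat) (c lam pi : 'I_k.+1 -> R) (mu : R -> R) (e : R) : R :=
  \sum_(j < k.+1) c j ^+ 2 * vn mu (lam j * e) / pi j - vn mu e.

Definition lower_boundary (Delta : R -> R) (e : R) : Prop :=
  [/\ 0 < e, Delta e = 0,
      (forall x, 0 < x -> x < e -> Delta x < 0) &
      exists eta, 0 < eta /\ forall x, e < x -> x < e + eta -> 0 < Delta x].

End ZNE.

(* Main.v *)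
Require Import Defs.
From HB Require Import structures.
From mathcomp Require Import all_boot all_order all_algebra.
From mathcomp Require Import reals ring lra.
Import Order.TTheory GRing.Theory Num.Theory.
Local Open Scope ring_scope.

Lemma bigO_ext {R : realType} (f g : R -> R) n :
  (forall e, 0 < e -> f e = g e) -> bigO_at0 f n -> bigO_at0 g n.
Proof.
move=> h [C [d [hd H]]]; exists C, d; split => // e he hed.
by rewrite -h //; apply: H.
Qed.
Arguments bigO_ext {R f g n}.


Lemma bigO_add {R : realType} (f g : R -> R) n :
  bigO_at0 f n -> bigO_at0 g n -> bigO_at0 (fun e => f e + g e) n.
Proof.
move=> [C1 [d1 [hd1 H1]]] [C2 [d2 [hd2 H2]]].
exists (C1 + C2), (Order.min d1 d2); split; first by rewrite lt_min hd1 hd2.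
move=> e he; rewrite lt_min => /andP [h1 h2].
apply: le_trans (ler_normD _ _) _.
have := H1 e he h1; have := H2 e he h2; lra.
Qed.
Arguments bigO_add {R f g n}.


Lemma bigO_scale {R : realType} (a : R) (f : R -> R) n :
  bigO_at0 f n -> bigO_at0 (fun e => a * f e) n.
Proof.
move=> [C [d [hd H]]]; exists (`|a| * C), d; split => // e he hed.
rewrite normrM -mulrA; apply: ler_wpM2l => //; exact: H.
Qed.
Arguments bigO_scale {R} a {f n}.


Lemma bigO_mul {R : realType} (f g : R -> R) n m :
  bigO_at0 f n -> bigO_at0 g m -> bigO_at0 (fun e => f e * g e) (n + m).
Proof.
move=> [C1 [d1 [hd1 H1]]] [C2 [d2 [hd2 H2]]].
exists (C1 * C2), (Order.min d1 d2); split; first by rewrite lt_min hd1 hd2.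
move=> e he; rewrite lt_min => /andP [h1 h2].
rewrite normrM exprD.
have -> : C1 * C2 * (e ^+ n * e ^+ m) = (C1 * e ^+ n) * (C2 * e ^+ m) by ring.
by apply: ler_pM => //; [apply: H1|apply: H2].
Qed.
Arguments bigO_mul {R f g n m}.


Lemma bigO_weaken {R : realType} (f : R -> R) n m :
  (m <= n)%N -> bigO_at0 f n -> bigO_at0 f m.
Proof.
move=> hmn [C [d [hd H]]]; exists `|C|, (Order.min d 1); split.
  by rewrite lt_min hd ltr01.
move=> e he; rewrite lt_min => /andP [h1 h2].
apply: le_trans (H e he h1) _.
apply: le_trans (_ : `|C| * e ^+ n <= _).
  apply: ler_wpM2r; [exact: exprn_ge0 (ltW he)| exact: ler_norm].
apply: ler_wpM2l => //; apply: ler_wiXn2l => //; [exact: ltW| exact: ltW].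
Qed.
Arguments bigO_weaken {R f n} m.


Lemma bigO_zero (R : realType) n : bigO_at0 (fun _ : R => 0) n.
Proof.
exists 0, 1; split => // e _ _; by rewrite normr0 mul0r.
Qed.

Lemma bigO_sum {R : realType} (I : finType) (F : I -> R -> R) n :
  (forall i, bigO_at0 (F i) n) -> bigO_at0 (fun e => \sum_i F i e) n.
Proof.
move=> H.
suff: forall s : seq I, bigO_at0 (fun e => \big[+%R/0]_(i <- s) F i e) n by [].
elim=> [|a s IH].
  by apply: bigO_ext (bigO_zero R n) => e _; rewrite big_nil.
by apply: bigO_ext (bigO_add (H a) IH) => e _; rewrite big_cons.
Qed.

Lemma bigO_pow (R : realType) n : bigO_at0 (fun e : R => e ^+ n) n.
Proof.
exists 1, 1; split => // e he _; rewrite mul1r ger0_norm //; exact: exprn_ge0 (ltW he).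
Qed.

Lemma bigO_monom {R : realType} (a : R) n : bigO_at0 (fun e : R => a * e ^+ n) n.
Proof. exact: bigO_scale (bigO_pow _ n). Qed.

Lemma pow_expand (R : realType) (l : nat) : exists K : R, forall x : R, `|x| <= 1 ->
  `|(1 + x) ^+ l - 1 - l%:R * x| <= K * x ^+ 2.
Proof.
elim: l => [|l [K IH]].
  exists 0 => x _; rewrite mul0r.
  by rewrite expr0 mul0r subr0 subrr normr0.
exists (2 * `|K| + l%:R) => x hx.
have -> : (1 + x) ^+ l.+1 - 1 - l.+1%:R * x
   = (1 + x) * ((1 + x) ^+ l - 1 - l%:R * x) + l%:R * x ^+ 2.
  by rewrite exprS -addn1 natrD; ring.
set p := (1 + x) ^+ l - 1 - l%:R * x.
apply: le_trans (ler_normD _ _) _.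
rewrite normrM (ger0_norm (_ : 0 <= l%:R * x ^+ 2)); last first.
  by apply: mulr_ge0; [exact: ler0n | exact: sqr_ge0].
have h1 : `|1 + x| <= 2 by apply: le_trans (ler_normD _ _) _; rewrite normr1; lra.
have h2 : `|p| <= `|K| * x ^+ 2.
  apply: le_trans (IH x hx) _; apply: ler_wpM2r; [exact: sqr_ge0| exact: ler_norm].
have := ler_pM (normr_ge0 _) (normr_ge0 _) h1 h2.
have := sqr_ge0 x; nra.
Qed.

Lemma bigO_powrem {R : realType} (a : R) (l : nat) :
  bigO_at0 (fun e => (1 + a * e) ^+ l - 1 - l%:R * (a * e)) 2.
Proof.
have [K HK] := pow_expand R l.
exists (K * a ^+ 2), (1 / (`|a| + 1)); split.
  by rewrite divr_gt0 // ltr_wpDl.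
move=> e he hed.
have ha : 0 < `|a| + 1 by rewrite ltr_wpDl.
rewrite ltr_pdivlMr // in hed.
have hx : `|a * e| <= 1.
  rewrite normrM (gtr0_norm he); have := normr_ge0 a; nra.
apply: le_trans (HK _ hx) _; rewrite exprMn mulrA; exact: lexx.
Qed.

Lemma S_gt1 {R : realType} (k : nat) (c lam pi : 'I_k.+1 -> R) :
  richardson_rule c lam -> allocation pi -> (1 <= k)%N ->
  1 < \sum_(j < k.+1) c j ^+ 2 * lam j / pi j.
Proof.
case=> hl0 hinc hc1 hcm [hpi hpis] hk.
have hlam1 : forall j, j != ord0 -> 1 < lam j.
  move=> j hj; rewrite -hl0; apply: hinc; rewrite lt0n.
  apply: contra hj => /eqP h; apply/eqP; exact: val_inj.
have key : \sum_(j < k.+1) c j ^+ 2 * lam j / pi j - 1 =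
   \sum_(j < k.+1) (c j ^+ 2 * (lam j - 1) / pi j + (c j - pi j) ^+ 2 / pi j).
  rewrite [RHS](eq_bigr (fun j => c j ^+ 2 * lam j / pi j + ((-2) * c j + pi j))); last first.
    move=> j _; have := hpi j => hp; field; by rewrite gt_eqF.
  by rewrite big_split big_split /= -mulr_sumr hc1 hpis; ring.
have hge : forall j, 0 <= c j ^+ 2 * (lam j - 1) / pi j + (c j - pi j) ^+ 2 / pi j.
  move=> j; apply: addr_ge0; apply: divr_ge0; try exact: ltW (hpi j).
  - apply: mulr_ge0; first exact: exprn_even_ge0.
    case: (eqVneq j ord0) => [->|hj]; first by rewrite hl0 subrr.
    by rewrite subr_ge0 ltW // hlam1.
  - exact: exprn_even_ge0.
case: (pickP (fun j => (j != ord0) && (c j != 0))) => [j /andP [hj hcj] | hnone].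
  rewrite -subr_gt0 key (bigD1 j) //=.
  apply: ltr_pwDl; last by apply: sumr_ge0 => i _; exact: hge.
  apply: ltr_pwDl; last by apply: divr_ge0; [exact: exprn_even_ge0| exact: ltW (hpi j)].
  apply: divr_gt0 => //; apply: mulr_gt0; first by rewrite exprn_even_gt0 // hcj orbT.
  by rewrite subr_gt0 hlam1.
have h0 : forall j, j != ord0 -> c j = 0.
  move=> j hj; have := hnone j; rewrite hj /= => /negbFE /eqP //.
have := hcm 1%N; rewrite hk => /(_ isT).
rewrite (bigD1 ord0) //= big1; last by move=> j /h0 ->; rewrite mul0r.
move: hc1; rewrite (bigD1 ord0) //= big1; last by move=> j /h0.
rewrite hl0 expr1n; lra.
Qed.

Lemma two_min {R : realType} (a b : R) : 0 < a -> 0 < b ->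
  exists d, [/\ 0 < d, d <= a & d <= b].
Proof.
move=> ha hb; exists (Order.min a b); split.
- by rewrite lt_min ha hb.
- by rewrite ge_min lexx.
- by rewrite ge_min lexx orbT.
Qed.
Arguments two_min {R a b}.


Lemma boundary_asym {R : realType} (Delta : R -> R -> R) (D A : R -> R) (k2 T : R)
  (estar : R -> R) :
  0 < k2 -> 0 < T ->
  (forall B e, 0 < B -> Delta B e = D e - A e / B) ->
  bigO_at0 (fun e => D e - k2 * e ^+ 2) 3 ->
  bigO_at0 (fun e => A e - k2 * T * e) 2 ->
  (exists B0, forall B, B0 < B -> lower_boundary (Delta B) (estar B)) ->
  forall eta, 0 < eta -> exists M, forall B, M < B -> `|estar B / (T / B) - 1| < eta.
Proof.
move=> hk hT hDel [C1 [d1 [hd1 H1]]] [C3 [d3 [hd3 H3]]] [B0 HB0] eta heta.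
set c1 := `|C1|; set c3 := `|C3|.
have hc1 : 0 <= c1 by exact: normr_ge0.
have hc3 : 0 <= c3 by exact: normr_ge0.
have HB1 : forall e, 0 < e -> e < d1 ->
    k2 * e ^+ 2 - c1 * e ^+ 3 <= D e <= k2 * e ^+ 2 + c1 * e ^+ 3.
  move=> e he hed; have := H1 e he hed.
  have : C1 * e ^+ 3 <= c1 * e ^+ 3.
    by apply: ler_wpM2r; [exact: exprn_ge0 (ltW he)| exact: ler_norm].
  move=> h1 h2; have := le_trans h2 h1; rewrite ler_norml => /andP [h3 h4].
  apply/andP; split; lra.
have HB3 : forall e, 0 < e -> e < d3 ->
    k2 * T * e - c3 * e ^+ 2 <= A e <= k2 * T * e + c3 * e ^+ 2.
  move=> e he hed; have := H3 e he hed.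
  have : C3 * e ^+ 2 <= c3 * e ^+ 2.
    by apply: ler_wpM2r; [exact: exprn_ge0 (ltW he)| exact: ler_norm].
  move=> h1 h2; have := le_trans h2 h1; rewrite ler_norml => /andP [h3 h4].
  apply/andP; split; lra.
have h2p : (0:R) < 2 by lra.
have [da [hda hda1 hda2]] := two_min (divr_gt0 hd1 h2p) (divr_gt0 hd3 h2p).
have hp1 : 0 < k2 / (2 * (c1 + 1)) by apply: divr_gt0 => //; lra.
have hp3 : 0 < k2 * T / (2 * (c3 + 1)) by apply: divr_gt0; [exact: mulr_gt0| lra].
have [db [hdb hdb1 hdb2]] := two_min hp1 hp3.
have [dl [hdl hdl1 hdl2]] := two_min hda hdb.
have hdl_d1 : dl < d1 by lra.
have hdl_d3 : dl < d3 by lra.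
have hdlc1 : dl * c1 <= k2 / 2.
  have : dl <= k2 / (2 * (c1 + 1)) by lra.
  rewrite ler_pdivlMr; last lra.
  move=> h; have : dl * c1 <= dl * c1 + dl by lra.
  rewrite -[k2 / 2]/(k2 * 2^-1); lra.
have hdlc3 : dl * c3 <= k2 * T / 2.
  have : dl <= k2 * T / (2 * (c3 + 1)) by lra.
  rewrite ler_pdivlMr; last lra.
  move=> h; lra.
have hDd : 0 < D dl.
  have := HB1 dl hdl hdl_d1 => /andP [h _].
  have h2 : c1 * dl ^+ 3 <= k2 / 2 * dl ^+ 2.
    have -> : c1 * dl ^+ 3 = (dl * c1) * dl ^+ 2 by ring.
    by apply: ler_wpM2r => //; exact: exprn_ge0 (ltW hdl).
  have h3 : 0 < k2 * dl ^+ 2 by apply: mulr_gt0 => //; exact: exprn_gt0.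
  lra.
pose W := (3 * T) * (c3 + c1 * (3 * T)).
have hW : 0 <= W.
  apply: mulr_ge0; first lra.
  apply: addr_ge0 => //; apply: mulr_ge0 => //; lra.
have hkeT : 0 < k2 * eta * T by apply: mulr_gt0 => //; exact: mulr_gt0.
exists (`|B0| + `|A dl| / D dl + W / (k2 * eta * T) + 1) => B hB.
have hM1 : 0 <= `|A dl| / D dl by apply: divr_ge0 => //; exact: ltW.
have hM2 : 0 <= W / (k2 * eta * T) by apply: divr_ge0 => //; exact: ltW.
have hB0n := ler_norm B0.
have hB0p := normr_ge0 B0.
have hB0B : B0 < B by lra.
have hBp : 0 < B by have := normr_ge0 B0; lra.
have hBA : `|A dl| < B * D dl by rewrite -ltr_pdivrMr //; lra.
have hBW : W < B * (k2 * eta * T) by rewrite -ltr_pdivrMr //; lra.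
have [he0 hDe hneg _] := HB0 B hB0B.
set e := estar B in he0 hDe hneg *.
have he_lt : e < dl.
  rewrite ltNge; apply/negP => hle.
  have hD0 : Delta B dl <= 0.
    move: hle; rewrite le_eqVlt => /orP [/eqP ->|hlt]; first by rewrite hDe.
    exact: ltW (hneg dl hdl hlt).
  move: hD0; rewrite hDel // => hD0.
  have : A dl / B <= `|A dl| / B.
    by apply: ler_wpM2r; [rewrite invr_ge0 ltW| exact: ler_norm].
  have : `|A dl| / B < D dl by rewrite ltr_pdivrMr //; lra.
  lra.
have /andP [hD1 hD2] := HB1 e he0 (lt_trans he_lt hdl_d1).
have /andP [hA1 hA2] := HB3 e he0 (lt_trans he_lt hdl_d3).
have hBDe : B * D e = A e.
  move: hDe; rewrite hDel // => /eqP; rewrite subr_eq0 => /eqP ->.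
  by rewrite mulrC divfK // gt_eqF.
have hBD1 : B * (k2 * e ^+ 2 - c1 * e ^+ 3) <= B * D e by apply: ler_wpM2l => //; exact: ltW.
have hBD2 : B * D e <= B * (k2 * e ^+ 2 + c1 * e ^+ 3) by apply: ler_wpM2l => //; exact: ltW.
have h1 : k2 * (e * B - T) <= e * (c3 + c1 * (e * B)).
  have : e * (k2 * (e * B - T) - e * (c3 + c1 * (e * B))) <= 0.
    have -> : e * (k2 * (e * B - T) - e * (c3 + c1 * (e * B)))
      = B * (k2 * e ^+ 2 - c1 * e ^+ 3) - (k2 * T * e + c3 * e ^+ 2) by ring.
    lra.
  rewrite pmulr_rle0 //; lra.
have h2 : k2 * (T - e * B) <= e * (c3 + c1 * (e * B)).
  have : e * (k2 * (T - e * B) - e * (c3 + c1 * (e * B))) <= 0.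
    have -> : e * (k2 * (T - e * B) - e * (c3 + c1 * (e * B)))
      = (k2 * T * e - c3 * e ^+ 2) - B * (k2 * e ^+ 2 + c1 * e ^+ 3) by ring.
    lra.
  rewrite pmulr_rle0 //; lra.
have hv0 : 0 <= e * B by apply: mulr_ge0; exact: ltW.
have hec1 : e * c1 <= k2 / 2.
  apply: le_trans hdlc1; apply: ler_wpM2r => //; exact: ltW.
have hec3 : e * c3 <= k2 * T / 2.
  apply: le_trans hdlc3; apply: ler_wpM2r => //; exact: ltW.
have hv3 : e * B <= 3 * T.
  have h4 : (e * c1) * (e * B) <= k2 / 2 * (e * B) by apply: ler_wpM2r.
  have : k2 * (e * B - 3 * T) <= 0.
    have hh : e * (c3 + c1 * (e * B)) = e * c3 + (e * c1) * (e * B) by ring.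
    rewrite hh in h1.
    clear - h1 h4 hec3; lra.
  rewrite pmulr_rle0 // => hh; clear - hh; lra.
have hWv : (e * B) * (c3 + c1 * (e * B)) <= W.
  apply: ler_pM => //.
    by apply: addr_ge0 => //; apply: mulr_ge0.
  by apply: lerD => //; apply: ler_wpM2l.
have hE : B * (e * (c3 + c1 * (e * B))) = (e * B) * (c3 + c1 * (e * B)) by ring.
have h1B : B * (k2 * (e * B - T)) <= B * (e * (c3 + c1 * (e * B))) by apply: ler_wpM2l => //; exact: ltW.
have h2B : B * (k2 * (T - e * B)) <= B * (e * (c3 + c1 * (e * B))) by apply: ler_wpM2l => //; exact: ltW.
have hkB : 0 < k2 * B by exact: mulr_gt0.
have hu1 : e * B - T < eta * T.
  have : (k2 * B) * (e * B - T - eta * T) < 0 by clear - h1B hE hWv hBW; lra.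
  rewrite pmulr_rlt0 // => hh; clear - hh; lra.
have hu2 : T - e * B < eta * T.
  have : (k2 * B) * (T - e * B - eta * T) < 0 by clear - h2B hE hWv hBW; lra.
  rewrite pmulr_rlt0 // => hh; clear - hh; lra.
have -> : e / (T / B) - 1 = (e * B - T) / T.
  by field; apply/andP; split; rewrite gt_eqF.
rewrite ltr_norml; apply/andP; split.
  by rewrite ltr_pdivlMr //; clear - hu2; lra.
by rewrite ltr_pdivrMr //; clear - hu1; lra.
Qed.

Theorem proposition10 (R : realType) (k : nat) (c lam pi : 'I_k.+1 -> R)
  (mu : R -> R) (gamma : R) (l : nat) :
  (1 <= k)%N -> richardson_rule c lam -> allocation pi ->
  0 < gamma -> (0 < l)%N ->
  (forall j : 'I_k.+1,
     bigO_at0 (fun e => mu (lam j * e) - (1 - gamma * lam j * e) ^+ l) 2) ->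
  let kappa := gamma * l%:R in
  let S := \sum_(j < k.+1) c j ^+ 2 * lam j / pi j in
  let K1 := 2 * kappa * (S - 1) in
  [/\ bigO_at0 (fun e => Dbias c lam mu e - kappa ^+ 2 * e ^+ 2) 3,
      bigO_at0 (fun e => vn mu e - 2 * kappa * e) 2,
      bigO_at0 (fun e => Ak c lam pi mu e - K1 * e) 2,
      (forall B e : R, 0 < B ->
         delta_mse c lam pi mu B e = Dbias c lam mu e - Ak c lam pi mu e / B) &
      forall estar : R -> R,
        (exists B0 : R, forall B, B0 < B ->
           lower_boundary (delta_mse c lam pi mu B) (estar B)) ->
        forall eta : R, 0 < eta -> exists M : R, forall B : R, M < B ->
          `| estar B / ((2 / kappa) * (S - 1) / B) - 1 | < eta].
Proof.
move=> hk hrr hal hg hl Hmu kappa S K1.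
have hS := @S_gt1 R k c lam pi hrr hal hk.
case: hrr => hl0 hinc hc1 hcm; case: hal => hpi hpis.
have hkap : 0 < kappa by rewrite /kappa mulr_gt0 // ltr0n.
pose s j e := mu (lam j * e) - 1 + kappa * lam j * e.
have Hs : forall j, bigO_at0 (s j) 2.
  move=> j; apply: bigO_ext (bigO_add (Hmu j) (bigO_powrem (- (gamma * lam j)) l)) => e _.
  rewrite /s /kappa.
  have -> : 1 + - (gamma * lam j) * e = 1 - gamma * lam j * e by ring.
  ring.
pose w j e := vn mu (lam j * e) - 2 * kappa * lam j * e.
have Hw : forall j, bigO_at0 (w j) 2.
  move=> j.
  have h1 := bigO_monom (- (kappa ^+ 2 * lam j ^+ 2)) 2.
  have h2 := bigO_weaken 2 (isT : (2 <= 2 + 2)%N) (bigO_mul (Hs j) (Hs j)).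
  have h3 := bigO_scale (-2) (Hs j).
  have h4 := bigO_weaken 2 (isT : (2 <= 1 + 2)%N)
     (bigO_mul (bigO_monom (2 * kappa * lam j) 1) (Hs j)).
  apply: bigO_ext (bigO_add (bigO_add h1 (bigO_scale (-1) h2)) (bigO_add h3 h4)) => e _.
  rewrite /w /vn /s; ring.
have hZ : forall e, bias_zne c lam mu e = \sum_(j < k.+1) c j * s j e.
  move=> e; rewrite /bias_zne.
  rewrite [RHS](eq_bigr (fun j => c j * mu (lam j * e) + (- c j) + kappa * e * (c j * lam j ^+ 1)));
    last by move=> j _; rewrite /s; ring.
  rewrite !big_split /= -mulr_sumr sumrN hc1 hcm ?hk //; ring.
have hN : forall e, bias_noisy mu e = - kappa * e + s ord0 e.
  by move=> e; rewrite /bias_noisy /s hl0 mul1r; ring.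
have P1 : bigO_at0 (fun e => Dbias c lam mu e - kappa ^+ 2 * e ^+ 2) 3.
  have hsum := bigO_sum _ (fun j e => c j * s j e) 2 (fun j => bigO_scale (c j) (Hs j)).
  have g1 := bigO_mul (bigO_monom (-2 * kappa) 1) (Hs ord0).
  have g2 := bigO_weaken 3 (isT : (3 <= 2 + 2)%N) (bigO_mul (Hs ord0) (Hs ord0)).
  have g3 := bigO_weaken 3 (isT : (3 <= 2 + 2)%N) (bigO_mul hsum hsum).
  apply: bigO_ext (bigO_add (bigO_add g1 g2) (bigO_scale (-1) g3)) => e _.
  rewrite /Dbias hZ hN /=; ring.
have P2 : bigO_at0 (fun e => vn mu e - 2 * kappa * e) 2.
  by apply: bigO_ext (Hw ord0) => e _; rewrite /w hl0 mul1r mulr1.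
have P3 : bigO_at0 (fun e => Ak c lam pi mu e - K1 * e) 2.
  have hsum := bigO_sum _ (fun j e => c j ^+ 2 / pi j * w j e) 2
     (fun j => bigO_scale (c j ^+ 2 / pi j) (Hw j)).
  apply: bigO_ext (bigO_add hsum (bigO_scale (-1) (Hw ord0))) => e _.
  rewrite /Ak /K1 /S.
  rewrite [in RHS](eq_bigr (fun j => c j ^+ 2 / pi j * w j e + 2 * kappa * e * (c j ^+ 2 * lam j / pi j)));
    last by move=> j _; rewrite /w; ring.
  rewrite big_split /= -mulr_sumr /w hl0 mul1r mulr1; ring.
have P4 : forall B e : R, 0 < B ->
    delta_mse c lam pi mu B e = Dbias c lam mu e - Ak c lam pi mu e / B.
  move=> B e hB; rewrite /delta_mse /mse_noisy /mse_zne /Dbias /Ak.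
  have -> : \sum_(j < k.+1) c j ^+ 2 * vn mu (lam j * e) / (pi j * B)
      = (\sum_(j < k.+1) c j ^+ 2 * vn mu (lam j * e) / pi j) / B.
    by rewrite mulr_suml; apply: eq_bigr => j _; rewrite invfM mulrA.
  ring.
split => //.
move=> estar HB eta heta.
have hT : 0 < (2 / kappa) * (S - 1).
  by apply: mulr_gt0; [apply: divr_gt0 | rewrite subr_gt0].
apply: (boundary_asym (fun B => delta_mse c lam pi mu B) (Dbias c lam mu)
   (Ak c lam pi mu) (kappa ^+ 2) ((2 / kappa) * (S - 1)) estar) => //.
- exact: exprn_gt0.
- apply: bigO_ext P3 => e _; rewrite /K1; field; by rewrite gt_eqF.
Qed.
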